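(* Let $\mathcal{X}=\{1,\dots,n\}$, let $\pi$ be a strictly positive probability distribution on $\mathcal{X}$, let $P$ be a transition matrix with $\pi P=\pi$, let $2\le k\le n$ and $\alpha\in[0,1]$. For a partition $(\mathcal{O}_i)_{i=1}^k$ of $\mathcal{X}$ into nonempty proper subsets let $A_\alpha=\alpha P+(1-\alpha)G$ with $G$ its Gibbs kernel. Then $$\min_{\mathcal{O}_1,\dots,\mathcal{O}_k}\mathrm{KL}_\pi(A_\alpha\|\Pi)\le\alpha\,\mathrm{KL}_\pi(P\|\Pi)-(1-\alpha)\Big(\sum_{i=1}^{k-1}\pi(i)\log\pi(i)+\Big(\sum_{j=k}^n\pi(j)\Big)\log\sum_{j=k}^n\pi(j)\Big).$$
   Context: Gibbs kernel: $G(x,y)=\pi(y)/\pi(\mathcal{O}(x))$ if $y\in\mathcal{O}(x)$ and $0$ otherwise, $\mathcal{O}(x)$ the block containing $x$, $\pi(\mathcal{O})=\sum_{z\in\mathcal{O}}\pi(z)$. $\Pi$ is the matrix with every row equal to $\pi$. $\mathrm{KL}_\pi(P\|Q)=\sum_{x,y}\pi(x)P(x,y)\log\frac{P(x,y)}{Q(x,y)}$ with $0\log(0/a)=0$. *)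

(* Defs.v *)
From HB Require Import structures.
From mathcomp Require Import all_boot all_order all_algebra.
From mathcomp Require Import all_classical all_reals.
From mathcomp Require Import exp.
Set Implicit Arguments. Unset Strict Implicit. Unset Printing Implicit Defensive.
Import Order.TTheory GRing.Theory Num.Theory.
Local Open Scope ring_scope.

Section Defs.
Variables (R : realType) (n : nat).

Definition pos_distr (pi : 'rV[R]_n) : Prop :=
  (forall x, 0 < pi 0 x) /\ \sum_x pi 0 x = 1.

Definition stochastic (P : 'M[R]_n) : Prop :=
  (forall x y, 0 <= P x y) /\ (forall x, \sum_y P x y = 1).

Definition Pimx (pi : 'rV[R]_n) : 'M[R]_n := \matrix_(x, y) pi 0 y.

Definition pimass (pi : 'rV[R]_n) (O : {set 'I_n}) : R := \sum_(z in O) pi 0 z.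

Definition gibbs (pi : 'rV[R]_n) (Q : {set {set 'I_n}}) : 'M[R]_n :=
  \matrix_(x, y) (if y \in finset.pblock Q x then pi 0 y / pimass pi (finset.pblock Q x) else 0).

Definition KLpi (pi : 'rV[R]_n) (P Q : 'M[R]_n) : R :=
  \sum_x \sum_y (if P x y == 0 then 0 else pi 0 x * P x y * ln (P x y / Q x y)).

Definition kpartition (k : nat) (Q : {set {set 'I_n}}) : Prop :=
  finset.partition Q [set: 'I_n] /\ #|Q| = k /\ (forall B, B \in Q -> B != [set: 'I_n]).

End Defs.

(* Main.v *)
Require Import Defs.
From HB Require Import structures.
From mathcomp Require Import all_boot all_order all_algebra.
From mathcomp Require Import all_classical all_reals.
From mathcomp Require Import exp.
From mathcomp Require Import zify ring lra.
Import Order.TTheory GRing.Theory Num.Theory.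
Local Open Scope ring_scope.

Lemma ln_le1 {R : realType} (x : R) : 0 < x -> ln x <= x - 1.
Proof. move=> x0; have := expR_ge1Dx (ln x); rewrite lnK ?posrE //; lra. Qed.

Lemma key {R : realType} (a m c : R) : 0 <= a -> 0 < m -> 0 < c ->
  a * ln (m / c) + (a - m) <= a * ln (a / c).
Proof.
move=> a0 m0 c0; have [->|ap] := eqVneq a 0; first by rewrite !mul0r; lra.
have {ap} ap : 0 < a by rewrite lt0r ap.
rewrite !ln_div ?posrE //.
have := ln_le1 _ (divr_gt0 m0 ap); rewrite ln_div ?posrE // => h.
have := ler_wpM2l (ltW ap) h.
rewrite mulrBr mulrBr mulr1 mulrCA divff ?gt_eqF // mulr1.
lra.
Qed.

Lemma convh {R : realType} (al a b c : R) : 0 <= al <= 1 -> 0 <= a -> 0 <= b -> 0 < c ->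
  (al * a + (1 - al) * b) * ln ((al * a + (1 - al) * b) / c)
  <= al * (a * ln (a / c)) + (1 - al) * (b * ln (b / c)).
Proof.
move=> /andP[al0 al1] a0 b0 c0.
have h1 : 0 <= al * a by apply: mulr_ge0.
have h2 : 0 <= (1 - al) * b by apply: mulr_ge0; lra.
have [m0|mp] := eqVneq (al * a + (1 - al) * b) 0.
  move: (m0) => /eqP; rewrite paddr_eq0 // => /andP[/eqP e1 /eqP e2].
  by rewrite m0 mul0r !mulrA e1 e2 !mul0r addr0.
have {mp} mp : 0 < al * a + (1 - al) * b by rewrite lt0r mp /= addr_ge0.
set m := al * a + (1 - al) * b in mp *.
have k1 := key _ _ _ a0 mp c0.
have k2 := key _ _ _ b0 mp c0.
set X := ln (m / c) in k1 k2 *.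
set Ya := a * ln (a / c) in k1 *.
set Yb := b * ln (b / c) in k2 *.
have e : m = al * a + (1 - al) * b by [].
have p1 : 0 <= 1 - al by lra.
have q1 := ler_wpM2l al0 k1.
have q2 := ler_wpM2l p1 k2.
have -> : m * X = al * (a * X + (a - m)) + (1 - al) * (b * X + (b - m)).
  clearbody m X Ya Yb; rewrite e; ring.
exact: lerD.
Qed.

Theorem corollary5p5 (R : realType) (n k : nat) (pi : 'rV[R]_n) (P : 'M[R]_n)
    (alpha : R) :
  pos_distr pi -> stochastic P -> pi *m P = pi ->
  (2 <= k)%N -> (k <= n)%N -> 0 <= alpha <= 1 ->
  exists Q : {set {set 'I_n}}, kpartition k Q /\
    KLpi pi (alpha *: P + (1 - alpha) *: gibbs pi Q) (Pimx pi)
    <= alpha * KLpi pi P (Pimx pi)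
       - (1 - alpha) *
         ((\sum_(i < n | (i < k.-1)%N) pi 0 i * ln (pi 0 i))
          + (\sum_(j < n | (k.-1 <= j)%N) pi 0 j)
            * ln (\sum_(j < n | (k.-1 <= j)%N) pi 0 j)).
Proof.
move=> [pipos pisum] [Pge0 Psum] _ k2 kn alb.
pose rep := fun x : 'I_n => minn x k.-1.
pose B := fun y : 'I_n => [set x : 'I_n | rep x == rep y].
pose D := [set x : 'I_n | (x < k)%N].
pose Q := B @: D.
have memB x y : (x \in B y) = (rep x == rep y) by rewrite inE.
have inQ x : B x \in Q.
  have lt : (rep x < n)%N by rewrite /rep; lia.
  have -> : B x = B (Ordinal lt).
    by apply/setP => z; rewrite !inE /rep /=; apply/eqP/eqP; lia.
  apply: imset_f; rewrite inE /rep /=; lia.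
have trivQ : finset.trivIset Q.
  apply/finset.trivIsetP => A A' /imsetP[y _ ->] /imsetP[y' _ ->] neq.
  rewrite finset.disjoints_subset; apply/fintype.subsetP => z; rewrite memB inE memB => /eqP e1.
  apply/negP => /eqP e2.
  move/negP: neq; apply; apply/eqP/setP => w; by rewrite !inE -e1 -e2.
have coverQ : finset.cover Q = finset.setT.
  apply/setP => x; rewrite finset.in_setT; apply/finset.bigcupP; exists (B x) => //.
  by rewrite memB.
have pbl x : finset.pblock Q x = B x by apply: finset.def_pblock => //; rewrite memB.
exists Q; split.
  split; first by rewrite /finset.partition coverQ eqxx trivQ /=;
    apply/negP => /imsetP[y _ e]; have := memB y y; rewrite -e inE eqxx.
  split.
    rewrite card_in_imset.
      have -> : D = widen_ord kn @: finset.setT.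
        apply/setP => x; rewrite inE; apply/idP/imsetP => [xk|[y _ ->]] /=.
          by exists (Ordinal xk) => //; apply: val_inj.
        exact: ltn_ord.
      rewrite card_imset ?cardsT ?card_ord //.
      by move=> a b /(congr1 val) /= /val_inj.
    move=> y y'; rewrite !inE => yk y'k e.
    have := memB y y'; rewrite -e memB eqxx /rep => /esym/eqP h.
    apply: val_inj => /=; lia.
  move=> A /imsetP[y _ ->]; apply/negP => /eqP e.
  have n2 : (0 < n)%N by lia.
  have n1 : (k.-1 < n)%N by lia.
  have h0 := memB (Ordinal n2) y; have h1 := memB (Ordinal n1) y.
  rewrite e finset.in_setT in h0; rewrite e finset.in_setT in h1.
  move: h0 h1; rewrite /rep /= => /esym/eqP h0 /esym/eqP h1; lia.
move: alb => /andP[al0 al1].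
pose m x := pimass pi (B x).
have mpos x : 0 < m x.
  rewrite /m /pimass (bigD1 x) ?memB //=.
  apply: (lt_le_trans (pipos x)); rewrite lerDl; apply: sumr_ge0 => i _; exact: ltW.
pose G := gibbs pi Q.
have Gxy x y : G x y = if y \in B x then pi 0 y / m x else 0 by rewrite mxE pbl.
have Gge0 x y : 0 <= G x y.
  rewrite Gxy; case: ifP => // _; apply: divr_ge0; [exact: ltW | exact: ltW].
pose h (c t : R) := t * ln (t / c).
have KLE (M : 'M[R]_n) : KLpi pi M (Pimx pi) = \sum_x \sum_y pi 0 x * h (pi 0 y) (M x y).
  apply: eq_bigr => x _; apply: eq_bigr => y _; rewrite /h mxE.
  by case: eqP => [->|_]; rewrite ?mul0r ?mulr0 // mulrA.
rewrite !KLE.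
have KLG : \sum_x \sum_y pi 0 x * h (pi 0 y) (G x y) =
    - ((\sum_(i < n | (i < k.-1)%N) pi 0 i * ln (pi 0 i))
          + (\sum_(j < n | (k.-1 <= j)%N) pi 0 j)
            * ln (\sum_(j < n | (k.-1 <= j)%N) pi 0 j)).
  have inner x : \sum_y pi 0 x * h (pi 0 y) (G x y) = - (pi 0 x * ln (m x)).
    rewrite (bigID (fun y => y \in B x)) /=.
    rewrite [X in _ + X]big1 ?addr0; last first.
      by move=> y /negbTE yB; rewrite /h Gxy yB mul0r mulr0.
    transitivity (\sum_(y | y \in B x) (pi 0 x * (- ln (m x)) / m x) * pi 0 y).
      apply: eq_bigr => y yB; rewrite /h Gxy yB.
      have -> : pi 0 y / m x / pi 0 y = (m x)^-1.
        by rewrite mulrAC divff ?gt_eqF // mul1r.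
      rewrite lnV ?posrE //.
      by move: (ln (m x)) => L; move: (pi 0 x) (pi 0 y) ((m x)^-1) => a b c; ring.
    rewrite -mulr_sumr.
    have -> : \sum_(y | y \in B x) pi 0 y = m x by [].
    by rewrite divfK ?gt_eqF // mulrN.
  rewrite (eq_bigr _ (fun x _ => inner x)) sumrN; congr (- _).
  rewrite (bigID (fun i : 'I_n => (i < k.-1)%N)) /=; congr (_ + _).
    apply: eq_bigr => i ik; congr (_ * ln _); rewrite /m /pimass.
    have -> : B i = [set i].
      apply/setP => z; rewrite !inE /rep; apply/eqP/eqP => [e|->] //.
      apply: val_inj => /=; lia.
    by rewrite finset.big_set1.
  rewrite mulr_suml; apply: eq_big => [i|i ik]; first by rewrite -leqNgt.
  congr (_ * ln _); rewrite /m /pimass; apply: eq_bigl => z.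
  rewrite inE /rep; apply/eqP/idP; lia.
apply: (le_trans (y := \sum_x \sum_y pi 0 x * (alpha * h (pi 0 y) (P x y)
   + (1 - alpha) * h (pi 0 y) (G x y)))).
  apply: ler_sum => x _; apply: ler_sum => y _.
  have -> : (alpha *: P + (1 - alpha) *: G) x y = alpha * P x y + (1 - alpha) * G x y.
    by rewrite !mxE.
  apply: ler_wpM2l; first exact: ltW.
  apply: convh; [by rewrite al0 al1 | exact: Pge0 | exact: Gge0 | exact: pipos].
have -> : \sum_x \sum_y pi 0 x * (alpha * h (pi 0 y) (P x y)
   + (1 - alpha) * h (pi 0 y) (G x y)) =
   alpha * (\sum_x \sum_y pi 0 x * h (pi 0 y) (P x y))
   + (1 - alpha) * (\sum_x \sum_y pi 0 x * h (pi 0 y) (G x y)).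
  rewrite !mulr_sumr -big_split; apply: eq_bigr => x _.
  rewrite !mulr_sumr -big_split; apply: eq_bigr => y _.
  by rewrite mulrDr [pi 0 x * (alpha * _)]mulrCA [pi 0 x * ((1 - alpha) * _)]mulrCA.
by rewrite KLG mulrN.
Qed.
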